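(* Let $G_1$ be a restricted frame graph, let $G_2$ be a chandelier with pivot $p$, and let $v\in V(G_1)$. Then the graph obtained from the disjoint union of $G_1$ and $G_2$ by identifying $v$ with $p$ is a restricted frame graph.
   Context: A chandelier is a graph obtained from a tree $T$ by adding a new vertex, the pivot, adjacent to every leaf of $T$. A frame is the boundary of an axis-parallel box $I\times J\subset\mathbb R^2$. A graph $G$ is a restricted frame graph if there is a family of frames $\{F_u : u\in V(G)\}$ with $uw\in E(G)$ iff $F_u\cap F_w\neq\emptyset$, satisfying: (1) corners of a frame do not coincide with any point of another frame; (2) the left side of any frame does not intersect any other frame; (3) if the right side of a frame intersects a second frame, this right side intersects both the top and the bottom side of the second frame; (4) if two frames have non-empty intersection, then no frame is entirely contained in the intersection of the two regions bounded by these two frames. *)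

(* Defs.v *)
From Stdlib Require Import Reals.
From mathcomp Require Import all_boot.

Set Implicit Arguments.
Unset Strict Implicit.
Unset Printing Implicit Defensive.

(* A frame is the boundary of the axis-parallel box [fl, fr] x [fb, ft];
   non-degeneracy (fl < fr, fb < ft) is required in [restricted_frame_graph]. *)
Record frame := Frame { fl : R; fr : R; fb : R; ft : R }.

Section FrameGeom.
Local Open Scope R_scope.

Definition frame_ok (F : frame) : Prop := fl F < fr F /\ fb F < ft F.

Definition in_region (F : frame) (x y : R) : Prop :=
  fl F <= x <= fr F /\ fb F <= y <= ft F.

Definition left_side (F : frame) (x y : R) : Prop :=
  x = fl F /\ fb F <= y <= ft F.
Definition right_side (F : frame) (x y : R) : Prop :=
  x = fr F /\ fb F <= y <= ft F.
Definition bottom_side (F : frame) (x y : R) : Prop :=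
  y = fb F /\ fl F <= x <= fr F.
Definition top_side (F : frame) (x y : R) : Prop :=
  y = ft F /\ fl F <= x <= fr F.

Definition on_frame (F : frame) (x y : R) : Prop :=
  left_side F x y \/ right_side F x y \/ bottom_side F x y \/ top_side F x y.

Definition corner (F : frame) (x y : R) : Prop :=
  (x = fl F \/ x = fr F) /\ (y = fb F \/ y = ft F).

Definition frames_meet (F G : frame) : Prop :=
  exists x y, on_frame F x y /\ on_frame G x y.

End FrameGeom.

(* A (finite simple) graph is an irreflexive relation [e] on a finType.
   [e] is a restricted frame graph if it is the intersection graph of a
   family of frames satisfying conditions (1)-(4). *)
Definition restricted_frame_graph (T : finType) (e : rel T) : Prop :=
  irreflexive e /\
  exists F : T -> frame,
    (forall u, frame_ok (F u)) /\
    (forall u w, u != w -> (e u w <-> frames_meet (F u) (F w))) /\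
    (forall u w, u != w -> forall x y, corner (F u) x y -> ~ on_frame (F w) x y) /\
    (forall u w, u != w -> forall x y, left_side (F u) x y -> ~ on_frame (F w) x y) /\
    (forall u w, u != w ->
       (exists x y, right_side (F u) x y /\ on_frame (F w) x y) ->
       (exists x y, right_side (F u) x y /\ top_side (F w) x y) /\
       (exists x y, right_side (F u) x y /\ bottom_side (F w) x y)) /\
    (forall u w, u != w -> frames_meet (F u) (F w) ->
       forall z, ~ (forall x y, on_frame (F z) x y ->
                      in_region (F u) x y /\ in_region (F w) x y)).

Definition del_rel (T : finType) (e : rel T) (p : T) : rel T :=
  [rel x y | [&& e x y, x != p & y != p]].

Definition is_tree_minus (T : finType) (e : rel T) (p : T) : Prop :=
  (exists x : T, x != p) /\
  (forall x y, x != p -> y != p -> connect (del_rel e p) x y) /\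
  (forall s : seq T, uniq s -> 2 < size s -> ~~ cycle (del_rel e p) s).

Definition leaf_minus (T : finType) (e : rel T) (p : T) (x : T) : bool :=
  (x != p) && (#|[set y | del_rel e p x y]| == 1).

Definition chandelier (T : finType) (e : rel T) (p : T) : Prop :=
  irreflexive e /\ symmetric e /\ is_tree_minus e p /\
  (forall x, x != p -> (e p x = leaf_minus e p x)).

(* vertex set: V1 + (V2 \ {p}); the identified vertex is [inl v]. *)
Definition glue (V1 V2 : finType) (p : V2) (e1 : rel V1) (e2 : rel V2) (v : V1)
  : rel (V1 + {x : V2 | x != p}) :=
  fun a b =>
    match a, b with
    | inl x, inl y => e1 x y
    | inr x, inr y => e2 (val x) (val y)
    | inl x, inr y => (x == v) && e2 p (val y)
    | inr x, inl y => (y == v) && e2 (val x) p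
    end.

Arguments glue {V1 V2} p e1 e2 v.

(* Main.v *)
Require Import Defs.
From Stdlib Require Import Reals Lra Classical ClassicalEpsilon.
From mathcomp Require Import all_boot zify.

Set Implicit Arguments.
Unset Strict Implicit.
Unset Printing Implicit Defensive.

Section Geo.
Local Open Scope R_scope.

Definition poke (F G : frame) : Prop :=
  fl F < fl G /\ fl G < fr F /\ fr F < fr G /\ fb F < fb G /\ ft G < ft F.
Definition inside (F G : frame) : Prop :=
  fl G < fl F /\ fr F < fr G /\ fb G < fb F /\ ft F < ft G.
Definition sep (F G : frame) : Prop :=
  fr F < fl G \/ fr G < fl F \/ ft F < fb G \/ ft G < fb F \/ inside F G \/ inside G F.
Definition relg F G := poke F G \/ poke G F \/ sep F G.

Ltac dands := repeat match goal with H : _ /\ _ |- _ => destruct H end.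
Ltac geo := unfold sep, poke, inside, frame_ok, on_frame, left_side, right_side,
  bottom_side, top_side, corner, in_region in *; dands; intuition lra.

Lemma sep_sym F G : sep F G -> sep G F.
Proof. geo. Qed.
Lemma relg_sym F G : relg F G -> relg G F.
Proof. unfold relg; intros [H|[H|H]]; auto using sep_sym. Qed.

Lemma on_frame_box F x y : frame_ok F -> on_frame F x y ->
  fl F <= x <= fr F /\ fb F <= y <= ft F.
Proof. geo. Qed.

Lemma sep_nopt F G x y : frame_ok F -> frame_ok G -> sep F G ->
  on_frame F x y -> on_frame G x y -> False.
Proof. unfold sep, poke, inside, frame_ok, on_frame, left_side, right_side,
  bottom_side, top_side in *.
  intros HF HG Hs H1 H2.
  destruct HF, HG.
  destruct H1 as [H1|[H1|[H1|H1]]]; destruct H2 as [H2|[H2|[H2|H2]]];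
  destruct Hs as [Hs|[Hs|[Hs|[Hs|[Hs|Hs]]]]]; dands; lra. Qed.

Lemma sep_nomeet F G : frame_ok F -> frame_ok G -> sep F G -> ~ frames_meet F G.
Proof. intros HF HG Hs [x [y [H1 H2]]]. exact (sep_nopt HF HG Hs H1 H2). Qed.

Lemma poke_meet F G : frame_ok G -> poke F G -> frames_meet F G.
Proof. intros HG Hp. exists (fr F), (ft G). unfold on_frame; split.
  - right; left; unfold right_side, poke, frame_ok in *; lra.
  - right; right; right; unfold top_side, poke, frame_ok in *; lra. Qed.

Lemma poke_sep F G : frame_ok F -> frame_ok G -> poke F G -> sep F G -> False.
Proof. intros HF HG Hp Hs. destruct (poke_meet HG Hp) as [x [y [H1 H2]]].
  exact (sep_nopt HF HG Hs H1 H2). Qed.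

Lemma poke_anti F G : poke F G -> poke G F -> False.
Proof. geo. Qed.

Lemma cond1 F G x y : frame_ok F -> frame_ok G -> relg F G ->
  corner F x y -> ~ on_frame G x y.
Proof. intros HF HG [H|[H|H]] Hc Ho. 
  - geo.
  - geo.
  - exact (sep_nopt HF HG H (x:=x) (y:=y) ltac:(geo) Ho).
Qed.

Lemma cond2 F G x y : frame_ok F -> frame_ok G -> relg F G ->
  left_side F x y -> ~ on_frame G x y.
Proof. intros HF HG [H|[H|H]] Hc Ho.
  - geo.
  - geo.
  - exact (sep_nopt HF HG H (x:=x) (y:=y) ltac:(geo) Ho).
Qed.

Lemma cond3 F G : frame_ok F -> frame_ok G -> relg F G ->
  (exists x y, right_side F x y /\ on_frame G x y) ->
  (exists x y, right_side F x y /\ top_side G x y) /\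
  (exists x y, right_side F x y /\ bottom_side G x y).
Proof. intros HF HG [H|[H|H]] [x [y [Hr Ho]]].
  - split; [exists (fr F), (ft G) | exists (fr F), (fb G)];
    unfold right_side, top_side, bottom_side, poke, frame_ok in *; lra.
  - exfalso; geo.
  - exfalso; exact (sep_nopt HF HG H (x:=x) (y:=y) ltac:(geo) Ho).
Qed.

Lemma region_box F G Z : frame_ok Z ->
  (forall x y, on_frame Z x y -> in_region F x y /\ in_region G x y) ->
  fl F <= fl Z /\ fl G <= fl Z /\ fr Z <= fr F /\ fr Z <= fr G /\
  fb F <= fb Z /\ fb G <= fb Z /\ ft Z <= ft F /\ ft Z <= ft G.
Proof. intros HZ H.
  destruct (H (fl Z) (fb Z)) as [H1 H2].
  { left; unfold left_side, frame_ok in *; lra. }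
  destruct (H (fr Z) (ft Z)) as [H3 H4].
  { right; left; unfold right_side, frame_ok in *; lra. }
  unfold in_region in *; lra. Qed.

End Geo.

Lemma min_ex (Q : nat -> Prop) n : Q n -> exists k, Q k /\ forall j, Q j -> k <= j.
Proof.
  elim: n {-2}n (leqnn n) => [|m IH] n Hn HQ.
  - exists n; split => // j _; move: Hn; rewrite leqn0 => /eqP ->; done.
  - case: (classic (exists j, j < n /\ Q j)) => [[j [Hj Qj]]|Hno].
    + apply: (IH j) => //; by rewrite -ltnS (leq_trans Hj Hn).
    + exists n; split => // j Qj; rewrite leqNgt; apply/negP => Hjn.
      by apply: Hno; exists j.
Qed.

Section Tree.
Variable T : finType.
Variable D : rel T.
Variable ok : pred T.
Hypothesis Dsym : symmetric D.
Hypothesis Dok : forall x y, D x y -> ok x /\ ok y.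
Hypothesis Dirr : irreflexive D.
Variable rt : T.
Hypothesis okrt : ok rt.
Hypothesis conn : forall x, ok x -> connect D rt x.
Hypothesis acyc : forall s : seq T, uniq s -> 2 < size s -> ~~ cycle D s.

Definition Pk k x := exists s, size s = k /\ path D rt s /\ last rt s = x.

Definition dep x : nat := epsilon (inhabits 0) (fun k => Pk k x /\ forall j, Pk j x -> k <= j).

Lemma dep_spec x : ok x -> Pk (dep x) x /\ forall j, Pk j x -> dep x <= j.
Proof.
  move=> Hx. rewrite /dep.
  apply: (epsilon_spec (inhabits 0) (fun k => Pk k x /\ forall j, Pk j x -> k <= j)).
  have /connectP [s Hs Hl] := conn Hx.
  apply: (@min_ex (fun k => Pk k x) (size s)). by exists s.
Qed.

Lemma dep_rt : dep rt = 0.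
Proof. have [_ H] := dep_spec okrt. apply/eqP; rewrite -leqn0; apply: H. by exists [::]. Qed.

Lemma dep0 x : ok x -> dep x = 0 -> x = rt.
Proof. move=> Hx H0. have [[s [Hs [_ Hl]]] _] := dep_spec Hx. rewrite H0 in Hs.
  by case: s Hs Hl => //= _ <-. Qed.

Lemma dep_edge x y : D x y -> dep y <= (dep x).+1.
Proof. move=> Hxy. have [Hx Hy] := Dok Hxy.
  have [[s [Hs [Hp Hl]]] _] := dep_spec Hx. have [_ H] := dep_spec Hy.
  apply: H. exists (rcons s y). rewrite size_rcons Hs rcons_path Hp Hl last_rcons Hxy. done.
Qed.

Definition par x : T := epsilon (inhabits rt) (fun y => D x y /\ (dep y).+1 = dep x).

Lemma par_spec x : ok x -> x != rt -> D x (par x) /\ (dep (par x)).+1 = dep x.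
Proof.
  move=> Hx Hxr. rewrite /par.
  apply: (epsilon_spec (inhabits rt) (fun y => D x y /\ (dep y).+1 = dep x)).
  have [[s [Hs [Hp Hl]]] _] := dep_spec Hx.
  case/lastP: s Hs Hp Hl => [|s z] Hs Hp Hl.
  - by move: Hxr; rewrite -Hl /= eqxx.
  - rewrite last_rcons in Hl; subst z. rewrite rcons_path in Hp. case/andP: Hp => Hp He.
    set y := last rt s in He. exists y. rewrite Dsym. split => //.
    have [Hy _] := Dok He.
    have [_ Hm] := dep_spec Hy.
    have h1 : dep y <= size s by apply: Hm; exists s.
    have h2 := dep_edge He. rewrite size_rcons in Hs. apply/eqP; rewrite eqn_leq.
    rewrite -Hs ltnS h1 /=. by rewrite Hs.
Qed.

Lemma par_ok x : ok x -> x != rt -> ok (par x).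
Proof. move=> Hx Hr. have [H _] := par_spec Hx Hr. by case: (Dok H). Qed.

Lemma ne_rt x : ok x -> 0 < dep x -> x != rt.
Proof. move=> Hx. apply: contraTneq => ->. by rewrite dep_rt. Qed.

Lemma iter_par x k : ok x -> k <= dep x -> ok (iter k par x) /\ dep (iter k par x) = dep x - k.
Proof.
  move=> Hx. elim: k => [|k IH] Hk /=; first by rewrite subn0.
  have [Hok Hd] := IH (ltnW Hk).
  have Hr : iter k par x != rt by apply: ne_rt => //; rewrite Hd subn_gt0.
  have [_ Hpd] := par_spec Hok Hr. split; first exact: par_ok.
  by rewrite subnS -Hd -Hpd.
Qed.

Lemma iter_par_rt x : ok x -> iter (dep x) par x = rt.
Proof. move=> Hx. have [Ho Hd] := iter_par Hx (leqnn _). apply: dep0 => //. by rewrite Hd subnn. Qed.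

Lemma path_up x m : ok x -> m <= dep x -> path D x (traject par (par x) m).
Proof.
  elim: m x => [|m IH] x Hx Hm //=.
  have Hr : x != rt by apply: ne_rt => //; exact: leq_trans (ltn0Sn m) Hm.
  have [He Hd] := par_spec Hx Hr. rewrite He /=. apply: IH; first exact: par_ok.
  by rewrite -ltnS Hd.
Qed.

Lemma path_down x m : ok x -> m <= dep x -> path D (iter m par x) (rev (traject par x m)).
Proof.
  move=> Hx. elim: m => [|m IH] Hm; first done.
  rewrite trajectSr rev_rcons /=. rewrite IH ?(ltnW Hm) // andbT.
  have [Ho Hd] := iter_par Hx (ltnW Hm).
  have Hr : iter m par x != rt by apply: ne_rt => //; rewrite Hd subn_gt0.
  have [He _] := par_spec Ho Hr. by rewrite Dsym.
Qed.

Lemma mem_traj_dep x m z : ok x -> m <= dep x -> z \in traject par x m ->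
  exists2 i, i < m & z = iter i par x.
Proof. move=> _ _ /trajectP. done. Qed.

Lemma uniq_traj x m : ok x -> m <= (dep x).+1 -> uniq (traject par x m).
Proof.
  elim: m x => [|m IH] x Hx Hm; first done.
  case: m IH Hm => [|m] IH Hm; first done.
  have Hr : x != rt by apply: ne_rt => //; rewrite -ltnS (leq_trans _ Hm).
  have [_ Hd] := par_spec Hx Hr.
  rewrite trajectS cons_uniq IH ?par_ok // ?Hd // andbT.
  apply/trajectP => [[i Hi Heq]].
  have Hpo := par_ok Hx Hr.
  have Hi' : i <= dep (par x) by rewrite -ltnS Hd (leq_trans Hi).
  have [_ Hdi] := iter_par Hpo Hi'.
  rewrite -Heq in Hdi. lia.
Qed.

Lemma edge_par x y : D x y -> (x != rt /\ y = par x) \/ (y != rt /\ x = par y).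
Proof.
  move=> Hxy. have [Hx Hy] := Dok Hxy.
  pose Q j := (j <= minn (dep x) (dep y)) && (iter (dep x - j) par x == iter (dep y - j) par y).
  have exQ : exists j, Q j.
  { exists 0. rewrite /Q leq0n /= !subn0 (iter_par_rt Hx) (iter_par_rt Hy). by []. }
  have ubQ : forall j, Q j -> j <= minn (dep x) (dep y) by move=> j /andP[].
  case: (ex_maxnP exQ ubQ) => j Qj Hmax.
  case/andP: Qj => Hjm /eqP Hj. rewrite leq_min in Hjm. case/andP: Hjm => Hjx Hjy.
  set a := dep y - j. set b := dep x - j.
  have Hab : iter a par y = iter b par x by rewrite Hj.
  case: (leqP (a + b) 1) => Hs.
  - have : (a = 0 /\ b = 0) \/ (a = 1 /\ b = 0) \/ (a = 0 /\ b = 1) by lia.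
    case=> [[Ea Eb]|[[Ea Eb]|[Ea Eb]]]; rewrite Ea Eb /= in Hab.
    + by rewrite Hab Dirr in Hxy.
    + right. split; last by rewrite Hab.
      apply: ne_rt => //. rewrite /a in Ea. lia.
    + left. split; last by rewrite Hab.
      apply: ne_rt => //. rewrite /b in Eb. lia.
  - exfalso.
    set s := traject par y a.+1 ++ rev (traject par x b).
    have Hsz : 2 < size s by rewrite size_cat size_rev !size_traject; lia.
    have Hu : uniq s.
    { rewrite cat_uniq rev_uniq uniq_traj // ?uniq_traj //; try lia.
      rewrite andbT /=. apply/hasPn => z. rewrite mem_rev => Hz.
      apply/negP => Hz0.
      have Hz' : z \in traject par y a.+1 := Hz0.
      case/trajectP: Hz => k Hk Ek. case/trajectP: Hz' => i Hi Ei.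
      have Ea : a = dep y - j by []. have Eb : b = dep x - j by [].
      have [_ Dk] := iter_par Hx (k:=k) ltac:(lia).
      have [_ Di] := iter_par Hy (k:=i) ltac:(lia).
      have E : dep x - k = dep y - i by rewrite -Dk -Di -Ek -Ei.
      have Hjj : Q (dep x - k).
      { rewrite /Q leq_min. apply/andP; split.
        - apply/andP; split; lia.
        - apply/eqP. have -> : dep x - (dep x - k) = k by lia.
          have -> : dep y - (dep x - k) = i by lia. by rewrite -Ek -Ei. }
      have := Hmax _ Hjj. lia. }
    have Hc : cycle D s.
    { rewrite (cycle_path x). 
      have Hl : last x s = x.
      { rewrite /s last_cat trajectSr last_rcons.
        case: (b) Hab => [|b'] Hab'; first by rewrite Hab'.
        by rewrite trajectS rev_cons last_rcons. }
      rewrite Hl cat_path trajectSr last_rcons -trajectSr trajectS /=.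
      rewrite Hxy path_up //; last lia.
      rewrite Hab. apply: path_down => //. lia. }
    by move: (acyc Hu Hsz); rewrite Hc.
Qed.


Definition anc a b := exists k, k <= dep b /\ iter k par b = a.

Lemma anc_refl b : anc b b.
Proof. by exists 0. Qed.

Lemma anc_par b : ok b -> b != rt -> anc (par b) b.
Proof. move=> Hb Hr. exists 1; split => //. case E: (dep b) => [|m] //. by rewrite (dep0 Hb E) eqxx in Hr. Qed.

Lemma anc_rt b : ok b -> anc rt b.
Proof. move=> Hb. exists (dep b); split => //. exact: iter_par_rt. Qed.

Lemma anc_ok a b : ok b -> anc a b -> ok a.
Proof. move=> Hb [k [Hk <-]]. by case: (iter_par Hb Hk). Qed.

Lemma anc_dep a b : ok b -> anc a b -> dep a <= dep b.
Proof. move=> Hb [k [Hk <-]]. case: (iter_par Hb Hk) => _ ->. exact: leq_subr. Qed.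

Local Open Scope R_scope.

Lemma INR_leq (m n : nat) : (m <= n)%N -> INR m <= INR n.
Proof. move=> H. apply: le_INR. exact/leP. Qed.
Lemma INR_ltn (m n : nat) : (m < n)%N -> INR m < INR n.
Proof. move=> H. apply: lt_INR. exact/ltP. Qed.

Definition idx (x : T) : nat := enum_rank x.
Definition Bb : R := INR (2 * #|T| + 2).
Definition bt : R := / Bb.

Lemma Bb_pos : 0 < Bb.
Proof. rewrite /Bb. apply: (INR_ltn (m:=0)). by rewrite addn2. Qed.
Lemma bt_pos : 0 < bt.
Proof. apply: Rinv_0_lt_compat. exact: Bb_pos. Qed.
Lemma Bb_bt : Bb * bt = 1.
Proof. rewrite /bt. apply: Rinv_r. apply: Rgt_not_eq. exact: Bb_pos. Qed.

Lemma idx_bound x : INR (idx x) + 3/2 < Bb / 2.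
Proof.
  have H : (idx x < #|T|)%N by rewrite /idx; exact: ltn_ord.
  have H1 := INR_leq H. rewrite S_INR in H1.
  rewrite /Bb plus_INR mult_INR. simpl (INR 2). lra.
Qed.

Lemma key_bt x : bt * (INR (idx x) + 3/2) < 1/2.
Proof. have := idx_bound x. have := Bb_bt. have := bt_pos. have := Bb_pos. nra. Qed.

Fixpoint posk (k : nat) (x : T) : R :=
  match k with 0%N => 0 | S k' => posk k' (par x) + (INR (idx x) + 1) * bt ^ (S k') end.

Definition lo x := posk (dep x) x.
Definition hi x := lo x + bt ^ (dep x) / 2.

Lemma lo_hi x : lo x < hi x.
Proof. rewrite /hi. have := pow_lt _ (dep x) bt_pos. lra. Qed.

Lemma pos_par x : ok x -> x != rt ->
  lo x = lo (par x) + (INR (idx x) + 1) * (bt * bt ^ (dep (par x))).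
Proof. move=> Hx Hr. have [_ Hd] := par_spec Hx Hr. by rewrite /lo -Hd. Qed.

Lemma hi_par x : ok x -> x != rt -> hi x = lo x + (bt * bt ^ (dep (par x))) / 2.
Proof. move=> Hx Hr. have [_ Hd] := par_spec Hx Hr. by rewrite /hi -Hd. Qed.

Lemma child_in x : ok x -> x != rt -> lo (par x) < lo x /\ hi x < hi (par x).
Proof.
  move=> Hx Hr. have E1 := pos_par Hx Hr. have E2 := hi_par Hx Hr.
  rewrite /hi in E2 *. rewrite E2 E1.
  have HP := pow_lt _ (dep (par x)) bt_pos. set P := bt ^ dep (par x) in HP *.
  have Hk := key_bt x. have Hb := bt_pos. have Hi := pos_INR (idx x).
  have H1 : 0 < bt * P by apply: Rmult_lt_0_compat.
  have H2 : 0 < (INR (idx x) + 1) * (bt * P) by apply: Rmult_lt_0_compat => //; lra.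
  have H3 : 0 < P * (1/2 - bt * (INR (idx x) + 3/2)) by apply: Rmult_lt_0_compat => //; lra.
  split; nra.
Qed.

Lemma sib_disj x y : ok x -> ok y -> x != rt -> y != rt -> par x = par y -> x != y ->
  hi x < lo y \/ hi y < lo x.
Proof.
  move=> Hx Hy Hxr Hyr Hp Hxy.
  have E1 := pos_par Hx Hxr. have E2 := hi_par Hx Hxr.
  have E3 := pos_par Hy Hyr. have E4 := hi_par Hy Hyr.
  rewrite /hi in E2 E4 *. rewrite E2 E4 E1 E3 Hp.
  have HP := pow_lt _ (dep (par y)) bt_pos. set P := bt ^ dep (par y) in HP *.
  have Hb := bt_pos.
  have Hne : idx x != idx y.
  { apply: contra Hxy => /eqP H. apply/eqP. apply: enum_rank_inj. exact: val_inj. }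
  have HQ : 0 < bt * P by apply: Rmult_lt_0_compat.
  set Q := bt * P in HQ *.
  case: (ltngtP (idx x) (idx y)) Hne => // Hlt _.
  - left. have := INR_leq Hlt. rewrite S_INR => H.
    have H' : 0 <= (INR (idx y) - INR (idx x) - 1) * Q by apply: Rmult_le_pos; lra.
    nra.
  - right. have := INR_leq Hlt. rewrite S_INR => H.
    have H' : 0 <= (INR (idx x) - INR (idx y) - 1) * Q by apply: Rmult_le_pos; lra.
    nra.
Qed.

Lemma anc_sub a b : ok b -> anc a b -> lo a <= lo b /\ hi b <= hi a.
Proof.
  move=> Hb [k [Hk <-]]. elim: k Hk => [|k IH] Hk /=; first lra.
  have [Ho Hd] := iter_par Hb (ltnW Hk).
  have Hr : iter k par b != rt by apply: ne_rt => //; rewrite Hd; lia.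
  have [H1 H2] := child_in Ho Hr. have [H3 H4] := IH (ltnW Hk). lra.
Qed.

Lemma anc_strict a b : ok b -> anc a b -> a != b -> lo a < lo b /\ hi b < hi a.
Proof.
  move=> Hb [[|k] [Hk Ha]] Hab; first by rewrite -Ha eqxx in Hab.
  rewrite -Ha /=.
  have [Ho Hd] := iter_par Hb (ltnW Hk).
  have Hr : iter k par b != rt by apply: ne_rt => //; rewrite Hd; lia.
  have [H1 H2] := child_in Ho Hr. have [H3 H4] := anc_sub Hb (ex_intro _ k (conj (ltnW Hk) erefl)).
  lra.
Qed.

Lemma band_rt x : ok x -> 0 <= lo x /\ hi x <= 1/2.
Proof.
  move=> Hx. have [H1 H2] := anc_sub Hx (anc_rt Hx).
  have E : lo rt = 0 by rewrite /lo dep_rt.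
  have E2 : hi rt = 1/2 by rewrite /hi E dep_rt /=; lra.
  lra.
Qed.

Lemma lam_n n x y : (dep x + dep y <= n)%N -> ok x -> ok y ->
  hi x < lo y \/ hi y < lo x \/ anc x y \/ anc y x.
Proof.
  elim: n x y => [|n IH] x y Hn Hx Hy.
  - have Ex : dep x = 0%N by lia. have Ey : dep y = 0%N by lia.
    rewrite (dep0 Hx Ex) (dep0 Hy Ey). right; right; left; exact: anc_refl.
  - case: (eqVneq x y) => [->|Hxy]; first by right; right; left; exact: anc_refl.
    (* wlog dep y <= dep x *)
    suff main : forall u w, ok u -> ok w -> u != w -> (dep w <= dep u)%N ->
        (dep u + dep w <= n.+1)%N -> hi u < lo w \/ hi w < lo u \/ anc u w \/ anc w u.
    { case: (leqP (dep y) (dep x)) => Hd.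
      - exact: main.
      - have Hyx : y != x by rewrite eq_sym.
        have Hs' : (dep y + dep x <= n.+1)%N by lia.
        have := main y x Hy Hx Hyx (ltnW Hd) Hs'. tauto. }
    move=> u w Hu Hw Huw Hd Hs.
    have Hu0 : (0 < dep u)%N.
    { rewrite lt0n; apply/negP => /eqP H0. have H1 : dep w = 0%N by lia.
      by rewrite (dep0 Hu H0) (dep0 Hw H1) eqxx in Huw. }
    have Hur := ne_rt Hu Hu0.
    have [He Hpd] := par_spec Hu Hur. have Hpo := par_ok Hu Hur.
    have [Hc1 Hc2] := child_in Hu Hur.
    have := IH (par u) w ltac:(by rewrite -ltnS -addSn Hpd) Hpo Hw.
    move=> [A|[A|[A|A]]].
    + left. lra.
    + right; left. lra.
    +
      case: A => [[|k] [Hk Ek]].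
      * rewrite /= in Ek. right; right; right. exists 1%N. split; [exact: Hu0 | by rewrite /= Ek].
      * rewrite /= in Ek.
        set c := iter k par w in Ek.
        have [Hco Hcd] := iter_par Hw (ltnW Hk).
        have Hcr : c != rt by apply: ne_rt => //; rewrite Hcd subn_gt0.
        case: (eqVneq c u) => [Ecu|Hcu].
        -- right; right; left. exists k. split; [exact: ltnW Hk | done].
        -- have := sib_disj Hco Hu Hcr Hur Ek Hcu.
           have [H1 H2] := anc_sub Hw (ex_intro _ k (conj (ltnW Hk) erefl)).
           rewrite -/c in H1 H2. case=> H; rewrite -/c in H; [right; left | left]; lra.
    +
      case: A => [k [Hk Ek]]. right; right; right. exists k.+1. split.
      * by rewrite -Hpd.
      * by rewrite iterSr.
Qed.

Lemma lam x y : ok x -> ok y -> hi x < lo y \/ hi y < lo x \/ anc x y \/ anc y x.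
Proof. move=> Hx Hy. exact: (lam_n (n := (dep x + dep y)%N)). Qed.


Variable leaf : pred T.
Hypothesis leaf_ok : forall x, leaf x -> ok x.
Hypothesis leaf_deg : forall x a b, leaf x -> D x a -> D x b -> a = b.
Hypothesis leaf_rt : leaf rt -> forall x, ok x -> leaf x.

Lemma has_child_leaf q c : ok c -> c != rt -> par c = q -> leaf q -> q = rt.
Proof.
  move=> Hc Hcr Hpc Hq. apply/eqP; apply/negPn/negP => Hqr.
  have Hqo := leaf_ok Hq.
  have [He Hd] := par_spec Hc Hcr. rewrite Hpc in He Hd.
  have [He2 Hd2] := par_spec Hqo Hqr.
  have E := leaf_deg Hq He2 (a:=par q) (b:=c) ltac:(by rewrite Dsym).
  rewrite -E in Hd. lia.
Qed.

Lemma anc_child a b : ok b -> anc a b -> a != b ->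
  exists w, [/\ ok w, w != rt, par w = a & anc w b].
Proof.
  move=> Hb [[|k] [Hk Ea]] Hab; first by rewrite -Ea eqxx in Hab.
  have [Ho Hd] := iter_par Hb (ltnW Hk).
  have Hr : iter k par b != rt by apply: ne_rt => //; rewrite Hd; lia.
  exists (iter k par b). split => //. exists k. split => //. exact: ltnW.
Qed.

Definition Mx : nat := \max_(y : T) dep y.
Definition Xn : R := INR Mx + 2.
Lemma dep_Mx x : INR (dep x) <= INR Mx.
Proof. apply: INR_leq. exact: leq_bigmax. Qed.

Definition fl0 x : R := INR (dep x).
Definition fr0 x : R := if leaf x then (if x == rt then Xn + 1 else Xn + 2) else INR (dep x) + 3/2.
Definition NF0 x : frame := Frame (fl0 x) (fr0 x) (lo x) (hi x).

Lemma NF0_ok x : ok x -> frame_ok (NF0 x).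
Proof.
  move=> Hx. rewrite /frame_ok /=. split; last exact: lo_hi.
  have := dep_Mx x. rewrite /fr0 /fl0 /Xn => H. case: (leaf x); last lra. case: (x == rt); lra.
Qed.

Lemma NF0_bounds x : ok x ->
  0 <= fl0 x /\ fr0 x <= Xn + 2 /\ 0 <= lo x /\ hi x <= 1/2 /\
  (leaf x -> fl0 x < Xn /\ Xn + 1 <= fr0 x) /\ (~~ leaf x -> fr0 x < Xn).
Proof.
  move=> Hx. have := dep_Mx x. have := pos_INR (dep x). have := band_rt Hx.
  rewrite /fr0 /fl0 /Xn => [[H1 H1'] H2 H3]. case: (leaf x) => /=.
  - case: (x == rt); repeat split => //; lra.
  - repeat split => //; lra.
Qed.

Lemma anc_far a b : ok b -> anc a b -> a != b -> ~ (b != rt /\ a = par b) ->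
  (dep a + 2 <= dep b)%N /\ ~~ leaf a.
Proof.
  move=> Hb Hab Hne Hnp.
  have [w [Hw Hwr Hpw Hwb]] := anc_child Hb Hab Hne.
  case: (eqVneq w b) => [Ewb|Hwb2].
  - exfalso. apply: Hnp. by rewrite -Ewb.
  - have [g [Hg Hgr Hpg Hgb]] := anc_child Hb Hwb Hwb2.
    have [_ Hd1] := par_spec Hw Hwr. have [_ Hd2] := par_spec Hg Hgr.
    have Hd3 := anc_dep Hb Hgb. rewrite Hpw in Hd1. rewrite Hpg in Hd2.
    split; first by rewrite addn2 Hd1 Hd2.
    apply/negP => Hla. have Ea := has_child_leaf Hw Hwr Hpw Hla.
    have Hlw : leaf w by apply: leaf_rt => //; rewrite -Ea.
    have := has_child_leaf Hg Hgr Hpg Hlw. by move/eqP; rewrite (negbTE Hwr).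
Qed.

Lemma poke_child c : ok c -> c != rt -> poke (NF0 (par c)) (NF0 c).
Proof.
  move=> Hc Hcr. have [He Hd] := par_spec Hc Hcr. have Hq := par_ok Hc Hcr.
  have [Hb1 Hb2] := child_in Hc Hcr.
  have Edc : INR (dep c) = INR (dep (par c)) + 1 by rewrite -Hd S_INR.
  have Mc := dep_Mx c. have Mq := dep_Mx (par c).
  rewrite /poke /NF0 /= /fl0 /fr0 /Xn.
  case Lq: (leaf (par c)).
  - have Eq := has_child_leaf Hc Hcr erefl Lq.
    have Lc : leaf c by apply: leaf_rt; rewrite -?Eq.
    rewrite Lc Eq eqxx (negbTE Hcr). rewrite Eq in Hb1 Hb2 Edc Mq. lra.
  - case Lc: (leaf c); last lra. rewrite (negbTE Hcr). lra.
Qed.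

Lemma poke_par a b : ok a -> ok b -> poke (NF0 a) (NF0 b) -> b != rt /\ a = par b.
Proof.
  move=> Ha Hb Hp. have Hpk := Hp. rewrite /poke /NF0 /= in Hp.
  case: Hp => [H1 [H2 [H3 [H4 H5]]]].
  have Hab : a != b by apply/eqP => E; rewrite E in H1; lra.
  case: (lam Ha Hb) => [A|[A|[A|A]]].
  - have := lo_hi b. lra.
  - have := lo_hi b. lra.
  - case: (classic (b != rt /\ a = par b)) => // Hnp.
    have [Hd Hl] := anc_far Hb A Hab Hnp.
    exfalso. move: H2. rewrite /fl0 /fr0 (negbTE Hl).
    have := INR_leq Hd. rewrite plus_INR. simpl (INR 2). lra.
  - have Hba : b != a by rewrite eq_sym.
    have [H6 H7] := anc_strict Ha A Hba. lra.
Qed.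

Lemma NF0_rel x y : ok x -> ok y -> x != y ->
  (D x y /\ (poke (NF0 x) (NF0 y) \/ poke (NF0 y) (NF0 x))) \/ (~~ D x y /\ sep (NF0 x) (NF0 y)).
Proof.
  move=> Hx Hy Hxy. case Dxy: (D x y).
  - left; split => //. case: (edge_par Dxy) => [[Hr ->]|[Hr ->]].
    + right; exact: poke_child.
    + left; exact: poke_child.
  - right; split => //. rewrite /sep /NF0 /=.
    case: (lam Hx Hy) => [A|[A|[A|A]]]; [tauto|tauto| |].
    + have Hnp : ~ (y != rt /\ x = par y).
      { move=> [Hr E]. have [He _] := par_spec Hy Hr. by rewrite -E Dsym Dxy in He. }
      have [Hd Hl] := anc_far Hy A Hxy Hnp. left.
      rewrite /fl0 /fr0 (negbTE Hl). have := INR_leq Hd. rewrite plus_INR. simpl (INR 2). lra.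
    + have Hyx : y != x by rewrite eq_sym.
      have Hnp : ~ (x != rt /\ y = par x).
      { move=> [Hr E]. have [He _] := par_spec Hx Hr. by rewrite -E Dxy in He. }
      have [Hd Hl] := anc_far Hx A Hyx Hnp. right; left.
      rewrite /fl0 /fr0 (negbTE Hl). have := INR_leq Hd. rewrite plus_INR. simpl (INR 2). lra.
Qed.

Lemma no_inside_pc c z : ok c -> c != rt -> ok z ->
  fl0 c <= fl0 z -> fr0 z <= fr0 (par c) -> lo c <= lo z -> hi z <= hi c -> False.
Proof.
  move=> Hc Hcr Hz H1 H2 H3 H4.
  have Hzf := NF0_ok Hz. rewrite /frame_ok /= in Hzf.
  have Hp := poke_child Hc Hcr. rewrite /poke /= in Hp.
  case: (lam Hz Hc) => [A|[A|[A|A]]]; try lra.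
  - case: (eqVneq z c) => [E|Hne]; first by rewrite E in H2; lra.
    have := anc_strict Hc A Hne. lra.
  - case: (eqVneq c z) => [E|Hne]; first by rewrite -E in H2; lra.
    have [w [Hw Hwr Hpw Hwz]] := anc_child Hz A Hne.
    have Hlc : ~~ leaf c.
    { apply/negP => Lc. have := has_child_leaf Hw Hwr Hpw Lc. by move/eqP; rewrite (negbTE Hcr). }
    have Hlq : ~~ leaf (par c).
    { apply/negP => Lq. have Eq := has_child_leaf Hc Hcr erefl Lq.
      have Lc : leaf c by apply: leaf_rt; rewrite -?Eq. by rewrite Lc in Hlc. }
    have [_ Hd] := par_spec Hw Hwr. have Hdz := anc_dep Hz Hwz.
    have [_ Hd2] := par_spec Hc Hcr. rewrite Hpw in Hd.
    have Efq : fr0 (par c) = INR (dep (par c)) + 3/2 by rewrite /fr0 (negbTE Hlq).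
    rewrite Efq in H2. rewrite /fl0 in Hzf.
    have := INR_leq Hdz. have := INR_leq (m := (dep (par c)).+2) (n := dep w) ltac:(by rewrite -Hd -Hd2).
    rewrite !S_INR. move=> ? ?; case: Hzf => ? ?; lra.
Qed.

Lemma no_inside_v L z : leaf L -> ok z ->
  fl0 L <= fl0 z -> fr0 z <= Xn -> lo L <= lo z -> hi z <= hi L -> False.
Proof.
  move=> HL Hz H1 H2 H3 H4. have Ho := leaf_ok HL.
  have [_ [_ [_ [_ [_ Hnl]]]]] := NF0_bounds Hz.
  have [_ [_ [_ [_ [Hl _]]]]] := NF0_bounds Hz.
  have Lz : ~~ leaf z by apply/negP => Lz; have := Hl Lz; lra.
  have := lo_hi z. move=> Hlz.
  case: (lam Hz Ho) => [A|[A|[A|A]]]; try lra.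
  - case: (eqVneq z L) => [E|Hne]; first by rewrite E HL in Lz.
    have := anc_strict Ho A Hne. lra.
  - case: (eqVneq L z) => [E|Hne]; first by rewrite -E HL in Lz.
    have [w [Hw Hwr Hpw Hwz]] := anc_child Hz A Hne.
    have EL := has_child_leaf Hw Hwr Hpw HL.
    have : leaf z by apply: leaf_rt => //; rewrite -EL.
    by rewrite (negbTE Lz).
Qed.

End Tree.
Section Lay.
Local Open Scope R_scope.
Definition pokeE F G := poke F G \/ poke G F.

Lemma chand_layout (V2 : finType) (e2 : rel V2) (p : V2) : chandelier e2 p ->
  exists (NF0 : V2 -> frame) (Xn : R), 0 <= Xn /\
  (forall x, x != p -> frame_ok (NF0 x) /\
     (0 <= fl (NF0 x)) /\ (fr (NF0 x) <= Xn + 2) /\ (0 <= fb (NF0 x)) /\ (ft (NF0 x) <= 1/2) /\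
     (e2 p x -> (fl (NF0 x) < Xn) /\ (Xn + 1 <= fr (NF0 x))) /\
     (~~ e2 p x -> (fr (NF0 x) < Xn))) /\
  (forall x y, x != p -> y != p -> x != y ->
     (e2 x y /\ pokeE (NF0 x) (NF0 y)) \/ (~~ e2 x y /\ sep (NF0 x) (NF0 y))) /\
  (forall a b z, a != p -> b != p -> z != p -> poke (NF0 a) (NF0 b) ->
     (fl (NF0 b) <= fl (NF0 z)) -> (fr (NF0 z) <= fr (NF0 a)) ->
     (fb (NF0 b) <= fb (NF0 z)) -> (ft (NF0 z) <= ft (NF0 b)) -> False) /\
  (forall L z, L != p -> z != p -> e2 p L ->
     (fl (NF0 L) <= fl (NF0 z)) -> (fr (NF0 z) <= Xn) ->
     (fb (NF0 L) <= fb (NF0 z)) -> (ft (NF0 z) <= ft (NF0 L)) -> False).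
Proof.
  move=> [irr2 [sym2 [[[x0 Hx0] [conn acyc]] piv]]].
  set D := del_rel e2 p.
  set ok := fun x : V2 => x != p.
  have Dsym : symmetric D.
  { move=> a b. rewrite /D /del_rel /= sym2. by case: (a != p); case: (b != p); rewrite ?andbT ?andbF. }
  have Dok : forall a b, D a b -> ok a /\ ok b.
  { move=> a b. rewrite /D /del_rel /= => /and3P[_ Ha Hb]. by split. }
  have Dirr : irreflexive D.
  { move=> a. by rewrite /D /del_rel /= irr2. }
  set leaf := leaf_minus e2 p.
  have leaf_ok : forall x, leaf x -> ok x by move=> x /andP[].
  have leaf_deg : forall x a b, leaf x -> D x a -> D x b -> a = b.
  { move=> x a b /andP[_ /cards1P [z Hz]] Ha Hb.
    have : a \in [set y | D x y] by rewrite inE.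
    have : b \in [set y | D x y] by rewrite inE.
    rewrite Hz !in_set1 => /eqP -> /eqP -> //. }
  have Hpiv : forall x, x != p -> e2 p x = leaf x by move=> x Hx; exact: piv.
  have [rt [okrt leaf_rt]] : exists rt, ok rt /\ (leaf rt -> forall x, ok x -> leaf x).
  { case: (classic (exists x, ok x /\ ~~ leaf x)) => [[r [Hr Hl]]|Hno].
    - exists r; split => //. by rewrite (negbTE Hl).
    - exists x0; split => // _ x Hx. apply/negPn/negP => Hl. apply: Hno. by exists x. }
  have conn' : forall x, ok x -> connect D rt x by move=> x Hx; exact: conn.
  exists (NF0 D rt leaf), (Xn D rt).
  split; first by rewrite /Xn; have := pos_INR (Mx D rt); lra.
  split; [|split; [|split]].
  - move=> x Hx. rewrite Hpiv //.
    have [B1 [B2 [B3 [B4 [B5 B6]]]]] := NF0_bounds Dsym Dok okrt conn' leaf Hx.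
    split; first exact: (NF0_ok D rt leaf (ok:=ok) Hx).
    rewrite /NF0 /=. do 4 (split => //).
  - move=> x y Hx Hy Hxy.
    have := NF0_rel Dsym Dok Dirr okrt conn' acyc leaf_ok leaf_deg leaf_rt Hx Hy Hxy.
    have E : D x y = e2 x y by rewrite /D /del_rel /= Hx Hy !andbT.
    by rewrite E.
  - move=> a b z Ha Hb Hz Hp H1 H2 H3 H4.
    have [Hbr Ea] := poke_par Dsym Dok okrt conn' leaf_ok leaf_deg leaf_rt Ha Hb Hp.
    subst a.
    exact: (no_inside_pc Dsym Dok okrt conn' leaf_ok leaf_deg leaf_rt Hb Hbr Hz H1 H2 H3 H4).
  - move=> L z HL Hz Hl H1 H2 H3 H4. rewrite Hpiv // in Hl.
    exact: (no_inside_v Dsym Dok okrt conn' leaf_ok leaf_deg leaf_rt Hl Hz H1 H2 H3 H4).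
Qed.

End Lay.

Section Asm.
Local Open Scope R_scope.

Lemma fin_delta (T : finType) (P : T -> R -> Prop) :
  (forall t, exists d, 0 < d /\ forall d', 0 < d' <= d -> P t d') ->
  exists d, 0 < d /\ forall t d', 0 < d' <= d -> P t d'.
Proof.
  move=> H.
  suff: forall s : seq T, exists d, 0 < d /\ forall t, t \in s -> forall d', 0 < d' <= d -> P t d'.
  { move=> /(_ (enum T)) [d [Hd Hs]]. exists d; split => // t d' Hd'. apply: Hs => //. by rewrite mem_enum. }
  elim=> [|t s [d [Hd Hs]]]; first by exists 1; split => //; lra.
  have [dt [Hdt Ht]] := H t.
  exists (Rmin dt d); split; first by apply: Rmin_glb_lt.
  move=> t'; rewrite inE => /orP [/eqP ->|Hin] d' [Hd1 Hd2].
  - apply: Ht. have := Rmin_l dt d. lra.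
  - apply: Hs => //. have := Rmin_r dt d. lra.
Qed.

Variables (V1 V2 : finType) (e1 : rel V1) (e2 : rel V2) (p : V2) (v : V1).
Variable F1 : V1 -> frame.
Hypothesis irr1 : irreflexive e1.
Hypothesis ok1 : forall u, frame_ok (F1 u).
Hypothesis ed1 : forall u w, u != w -> (e1 u w <-> frames_meet (F1 u) (F1 w)).
Hypothesis h1 : forall u w, u != w -> forall x y, corner (F1 u) x y -> ~ on_frame (F1 w) x y.
Hypothesis h2 : forall u w, u != w -> forall x y, left_side (F1 u) x y -> ~ on_frame (F1 w) x y.
Hypothesis h3 : forall u w, u != w ->
       (exists x y, right_side (F1 u) x y /\ on_frame (F1 w) x y) ->
       (exists x y, right_side (F1 u) x y /\ top_side (F1 w) x y) /\
       (exists x y, right_side (F1 u) x y /\ bottom_side (F1 w) x y).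
Hypothesis h4 : forall u w, u != w -> frames_meet (F1 u) (F1 w) ->
       forall z, ~ (forall x y, on_frame (F1 z) x y ->
                      in_region (F1 u) x y /\ in_region (F1 w) x y).

Definition X := fr (F1 v).
Definition Y := ft (F1 v).

Definition GoodW w d :=
  (fl (F1 w) < X - d /\ X + d < fr (F1 w) /\ fb (F1 w) < Y - d /\ Y + d < ft (F1 w)) \/
  (fr (F1 w) < X - d \/ X + d < fl (F1 w) \/ ft (F1 w) < Y - d \/ Y + d < fb (F1 w)).

Lemma corner_v : corner (F1 v) X Y.
Proof. rewrite /corner /X /Y. split; by right. Qed.

Lemma good_exists w : w != v -> exists d, 0 < d /\ forall d', 0 < d' <= d -> GoodW w d'.
Proof.
  move=> Hw.
  have Hnc : ~ on_frame (F1 w) X Y.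
  { apply: (h1 (u:=v) (w:=w)); [by rewrite eq_sym | exact: corner_v]. }
  have Ho := ok1 w. rewrite /frame_ok in Ho.
  rewrite /GoodW.
  set a := fl (F1 w) in Ho Hnc *. set b := fr (F1 w) in Ho Hnc *.
  set c := fb (F1 w) in Ho Hnc *. set e := ft (F1 w) in Ho Hnc *.
  case: (Rlt_or_le X a) => H1.
  { exists ((a - X)/2); split; [lra| move=> d' Hd; right; lra]. }
  case: (Rlt_or_le b X) => H2.
  { exists ((X - b)/2); split; [lra| move=> d' Hd; right; lra]. }
  case: (Rlt_or_le Y c) => H3.
  { exists ((c - Y)/2); split; [lra| move=> d' Hd; right; lra]. }
  case: (Rlt_or_le e Y) => H4.
  { exists ((Y - e)/2); split; [lra| move=> d' Hd; right; lra]. }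
  case: (Req_dec X a) => E1.
  { exfalso; apply: Hnc; left; rewrite /left_side -/a -/b -/c -/e; lra. }
  case: (Req_dec X b) => E2.
  { exfalso; apply: Hnc; right; left; rewrite /right_side -/a -/b -/c -/e; lra. }
  case: (Req_dec Y c) => E3.
  { exfalso; apply: Hnc; right; right; left; rewrite /bottom_side -/a -/b -/c -/e; lra. }
  case: (Req_dec Y e) => E4.
  { exfalso; apply: Hnc; right; right; right; rewrite /top_side -/a -/b -/c -/e; lra. }
  set m := Rmin (Rmin (X - a) (b - X)) (Rmin (Y - c) (e - Y)).
  have M1 := Rmin_l (Rmin (X - a) (b - X)) (Rmin (Y - c) (e - Y)).
  have M2 := Rmin_r (Rmin (X - a) (b - X)) (Rmin (Y - c) (e - Y)).
  have M3 := Rmin_l (X - a) (b - X). have M4 := Rmin_r (X - a) (b - X).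
  have M5 := Rmin_l (Y - c) (e - Y). have M6 := Rmin_r (Y - c) (e - Y).
  have Mp : 0 < m by repeat apply: Rmin_glb_lt; lra.
  rewrite -/m in M1 M2.
  exists (m / 2); split; [lra| move=> d' Hd; left; lra].
Qed.

Lemma fv_in_region u : u != v -> fl (F1 u) < X < fr (F1 u) -> fb (F1 u) < Y < ft (F1 u) ->
  forall x y, on_frame (F1 v) x y -> in_region (F1 u) x y.
Proof.
  move=> Hu [H1 H2] [H3 H4] x y Hxy.
  have Hv := ok1 v. have Hou := ok1 u.
  have B := on_frame_box Hv Hxy.
  have L : fl (F1 u) <= fl (F1 v).
  { apply: Rnot_lt_le => Hlt. apply: (h2 (u:=u) (w:=v) Hu (x:=fl (F1 u)) (y:=Y)).
    - rewrite /left_side; split => //; lra.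
    - right; right; right. rewrite /top_side /Y /X in H1 H2 *. split => //. lra. }
  have Bt : fb (F1 u) <= fb (F1 v).
  { apply: Rnot_lt_le => Hlt.
    have Hvu : v != u by rewrite eq_sym.
    have Hex : exists x y, right_side (F1 v) x y /\ on_frame (F1 u) x y.
    { exists X, (fb (F1 u)). split.
      - rewrite /right_side. split; first done. rewrite /Y in H3 H4. rewrite /frame_ok in Hou. lra.
      - right; right; left. rewrite /bottom_side. split; first done. lra. }
    have [[x' [y' [R1 T1]]] _] := h3 Hvu Hex.
    rewrite /right_side /top_side /Y in R1 T1 H4. lra. }
  rewrite /in_region. rewrite /X /Y in H1 H2 H3 H4. lra.
Qed.


Hypothesis irr2 : irreflexive e2.
Hypothesis sym2 : symmetric e2.
Variables (NF0 : V2 -> frame) (Xn : R).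
Hypothesis Xn0 : 0 <= Xn.
Hypothesis LB : forall x, x != p -> frame_ok (NF0 x) /\
     0 <= fl (NF0 x) /\ fr (NF0 x) <= Xn + 2 /\ 0 <= fb (NF0 x) /\ ft (NF0 x) <= 1/2 /\
     (e2 p x -> fl (NF0 x) < Xn /\ Xn + 1 <= fr (NF0 x)) /\
     (~~ e2 p x -> fr (NF0 x) < Xn).
Hypothesis LR : forall x y, x != p -> y != p -> x != y ->
     (e2 x y /\ pokeE (NF0 x) (NF0 y)) \/ (~~ e2 x y /\ sep (NF0 x) (NF0 y)).
Hypothesis LC : forall a b z, a != p -> b != p -> z != p -> poke (NF0 a) (NF0 b) ->
     fl (NF0 b) <= fl (NF0 z) -> fr (NF0 z) <= fr (NF0 a) ->
     fb (NF0 b) <= fb (NF0 z) -> ft (NF0 z) <= ft (NF0 b) -> False.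
Hypothesis LV : forall L z, L != p -> z != p -> e2 p L ->
     fl (NF0 L) <= fl (NF0 z) -> fr (NF0 z) <= Xn ->
     fb (NF0 L) <= fb (NF0 z) -> ft (NF0 z) <= ft (NF0 L) -> False.
Variable dl : R.
Hypothesis dl_pos : 0 < dl.
Hypothesis dl_good : forall w, w != v -> GoodW w dl.
Hypothesis dl_v1 : dl < X - fl (F1 v).
Hypothesis dl_v2 : dl < Y - fb (F1 v).

Definition sc := dl / (Xn + 3).
Lemma sc_pos : 0 < sc.
Proof. rewrite /sc. apply: Rdiv_lt_0_compat; lra. Qed.
Lemma sc_eq : sc * (Xn + 3) = dl.
Proof. rewrite /sc. field. lra. Qed.

Definition mx t := X + sc * (t - Xn).
Definition my t := Y - 3 * dl / 4 + (dl / 4) * t.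

Lemma mx_lt a b : a < b <-> mx a < mx b.
Proof. move: sc_pos => Hs. rewrite /mx. split => H; nra. Qed.
Lemma mx_le a b : a <= b <-> mx a <= mx b.
Proof. move: sc_pos => Hs. rewrite /mx. split => H; nra. Qed.
Lemma my_lt a b : a < b <-> my a < my b.
Proof. rewrite /my. split => H; nra. Qed.
Lemma my_le a b : a <= b <-> my a <= my b.
Proof. rewrite /my. split => H; nra. Qed.
Lemma mx_Xn : mx Xn = X.
Proof. rewrite /mx. ring. Qed.
Lemma mx_range t : 0 <= t <= Xn + 2 -> X - dl < mx t /\ mx t < X + dl.
Proof. move=> Ht. have := sc_pos. have := sc_eq. rewrite /mx. split; nra. Qed.
Lemma my_range t : 0 <= t <= 1/2 -> Y - dl < my t /\ my t < Y.
Proof. move=> Ht. rewrite /my. split; nra. Qed.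

Definition NF z := Frame (mx (fl (NF0 z))) (mx (fr (NF0 z))) (my (fb (NF0 z))) (my (ft (NF0 z))).

Lemma NF_ok z : z != p -> frame_ok (NF z).
Proof. move=> Hz. have [[H1 H2] _] := LB Hz. rewrite /frame_ok /=. by rewrite -mx_lt -my_lt. Qed.

Lemma NF_box z : z != p ->
  X - dl < fl (NF z) /\ fr (NF z) < X + dl /\ Y - dl < fb (NF z) /\ ft (NF z) < Y /\
  (e2 p z -> fl (NF z) < X /\ X < fr (NF z)) /\ (~~ e2 p z -> fr (NF z) < X).
Proof.
  move=> Hz. have [[O1 O2] [B1 [B2 [B3 [B4 [B5 B6]]]]]] := LB Hz.
  rewrite /NF /=.
  have [R1 _] := mx_range (t := fl (NF0 z)) ltac:(lra).
  have [_ R2] := mx_range (t := fr (NF0 z)) ltac:(lra).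
  have [R3 _] := my_range (t := fb (NF0 z)) ltac:(lra).
  have [_ R4] := my_range (t := ft (NF0 z)) ltac:(lra).
  do 4 (split => //). split.
  - move=> /B5 [C1 C2]. rewrite -mx_Xn. by rewrite -mx_lt -mx_lt; split => //; lra.
  - move=> /B6 C. by rewrite -mx_Xn -mx_lt.
Qed.

Lemma poke_map a b : poke (NF0 a) (NF0 b) <-> poke (NF a) (NF b).
Proof. rewrite /poke /NF /=. by rewrite -!mx_lt -!my_lt. Qed.

Lemma sep_map a b : sep (NF0 a) (NF0 b) -> sep (NF a) (NF b).
Proof. rewrite /sep /inside /NF /=. by rewrite -!mx_lt -!my_lt. Qed.

Lemma old_new w z : w != v -> z != p -> sep (F1 w) (NF z).
Proof.
  move=> Hw Hz. have := dl_good Hw. have := NF_box Hz. have := NF_ok Hz.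
  rewrite /GoodW /sep /inside /frame_ok. move=> [O1 O2] [B1 [B2 [B3 [B4 _]]]].
  have := ok1 w. rewrite /frame_ok => [[O3 O4]].
  case=> [[A1 [A2 [A3 A4]]]|[A|[A|[A|A]]]].
  - right; right; right; right; right. lra.
  - left; lra.
  - right; left; lra.
  - right; right; left; lra.
  - right; right; right; left; lra.
Qed.

Lemma v_new z : z != p -> if e2 p z then poke (F1 v) (NF z) else sep (F1 v) (NF z).
Proof.
  move=> Hz. have := NF_box Hz. have := NF_ok Hz. move=> [O1 O2] [B1 [B2 [B3 [B4 [B5 B6]]]]].
  have := ok1 v. rewrite /frame_ok => [[O3 O4]].
  have W1 := dl_v1. have W2 := dl_v2.
  rewrite /X /Y in B1 B2 B3 B4 B5 B6 W1 W2.
  case E: (e2 p z).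
  - have [C1 C2] := B5 E. rewrite /poke /X /Y. lra.
  - have C := B6 (negbT E). rewrite /sep /inside. right; right; right; right; right. lra.
Qed.


Lemma old_in_box w a1 a2 b1 b2 : w != v -> X - dl < a1 -> a2 < X + dl -> Y - dl < b1 -> b2 < Y + dl ->
  a1 <= fl (F1 w) -> fr (F1 w) <= a2 -> b1 <= fb (F1 w) -> ft (F1 w) <= b2 -> False.
Proof.
  move=> Hw H1 H2 H3 H4 H5 H6 H7 H8. have := dl_good Hw. have := ok1 w.
  rewrite /GoodW /frame_ok. move=> [O1 O2] [[A1 [A2 [A3 A4]]]|[A|[A|[A|A]]]]; lra.
Qed.

Definition W := (V1 + {x : V2 | x != p})%type.
Definition FF (a : W) : frame := match a with inl x => F1 x | inr z => NF (val z) end.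
Definition gl := glue p e1 e2 v.
Lemma FF_inl x : FF (inl x) = F1 x. Proof. by []. Qed.
Lemma FF_inr z : FF (inr z) = NF (val z). Proof. by []. Qed.

Definition good_rel (a b : W) :=
  (gl a b /\ pokeE (FF a) (FF b)) \/ (~~ gl a b /\ sep (FF a) (FF b)).

Lemma FF_ok a : frame_ok (FF a).
Proof. case: a => [x|z] /=; [exact: ok1 | exact: NF_ok (valP z)]. Qed.

Lemma good_new a b : a != b -> (forall x y, a = inl x -> b = inl y -> False) -> good_rel a b.
Proof.
  rewrite /good_rel /gl /pokeE.
  case: a => [x|z]; case: b => [y|z'] //= Hab Hni.
  - by case: (Hni x y erefl erefl).
  - have Hz := valP z'. case: (eqVneq x v) => [->|Hxv] /=.
    + have := v_new Hz. case: (e2 p (val z')) => H; [left|right]; tauto.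
    + right; split => //. exact: old_new.
  - have Hz := valP z. rewrite (sym2 (val z)). case: (eqVneq y v) => [->|Hyv] /=.
    + have := v_new Hz. case: (e2 p (val z)) => H; [left|right]; split => //; try tauto.
      exact: sep_sym.
    + right; split => //. apply: sep_sym. exact: old_new.
  - have Hne : val z != val z'.
    { apply: contra Hab => /eqP E. apply/eqP. congr inr. exact: val_inj. }
    case: (LR (valP z) (valP z') Hne) => [[He [P|P]]|[He S]].
    + left; split => //; left; exact/poke_map.
    + left; split => //; right; exact/poke_map.
    + right; split => //; exact: sep_map.
Qed.

Lemma good_relg a b : good_rel a b -> relg (FF a) (FF b).
Proof. rewrite /good_rel /relg /pokeE. tauto. Qed.

Lemma good_edge a b : good_rel a b -> (gl a b <-> frames_meet (FF a) (FF b)).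
Proof.
  have Oa := FF_ok a. have Ob := FF_ok b.
  rewrite /good_rel /pokeE => [[[G [P|P]]|[G S]]].
  - split => // _. exact: poke_meet.
  - split => // _. case: (poke_meet Oa P) => x [y [H1 H2]]. by exists x, y.
  - split => [H|H]; first by rewrite H in G. exfalso. exact: (sep_nomeet Oa Ob S).
Qed.

Lemma poke4 a b z : (forall x y, a = inl x -> b = inl y -> False) ->
  poke (FF a) (FF b) ->
  fl (FF b) <= fl (FF z) -> fr (FF z) <= fr (FF a) ->
  fb (FF b) <= fb (FF z) -> ft (FF z) <= ft (FF b) -> False.
Proof.
  move=> Hni. have Ov := ok1 v. rewrite /frame_ok in Ov.
  have W1 := dl_v1. have W2 := dl_v2.
  case: a Hni => [x|q]; case: b => [y|c] Hni; rewrite ?FF_inl ?FF_inr.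
  - by case: (Hni x y erefl erefl).
  - have Hc := valP c. move=> Hp.
    case: (eqVneq x v) => [Exv|Hxv]; last first.
    { have := old_new Hxv Hc. move=> S. by case: (poke_sep (ok1 x) (NF_ok Hc) Hp S). }
    subst x. have := v_new Hc. case Ec: (e2 p (val c)) => Hv; last first.
    { by case: (poke_sep (ok1 v) (NF_ok Hc) Hp Hv). }
    have [B1 [B2 [B3 [B4 _]]]] := NF_box Hc.
    case: z => [z'|z''] H1 H2 H3 H4; rewrite ?FF_inl ?FF_inr in H1 H2 H3 H4.
    + case: (eqVneq z' v) => [E|Hz'].
      * subst z'. lra.
      * apply: (old_in_box Hz' (a1 := fl (NF (val c))) (a2 := X) (b1 := fb (NF (val c)))
          (b2 := ft (NF (val c)))) => //; lra.
    + have Hz := valP z''. apply: (LV Hc Hz Ec).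
      * exact/mx_le.
      * apply/mx_le. rewrite mx_Xn. exact: H2.
      * exact/my_le.
      * exact/my_le.
  - have Hq := valP q. move=> Hp.
    case: (eqVneq y v) => [Eyv|Hyv].
    + subst y. have := v_new Hq. case: (e2 p (val q)) => Hv.
      * by case: (poke_anti Hp Hv).
      * by case: (poke_sep (NF_ok Hq) (ok1 v) Hp (sep_sym Hv)).
    + have S := old_new Hyv Hq. by case: (poke_sep (NF_ok Hq) (ok1 y) Hp (sep_sym S)).
  - have Hq := valP q. have Hc := valP c. move=> Hp.
    have Hp0 : poke (NF0 (val q)) (NF0 (val c)) by apply/poke_map.
    have [B1 [B2 [B3 [B4 _]]]] := NF_box Hc.
    have [C1 [C2 [C3 [C4 _]]]] := NF_box Hq.
    case: z => [z'|z''] H1 H2 H3 H4; rewrite ?FF_inl ?FF_inr in H1 H2 H3 H4.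
    + case: (eqVneq z' v) => [E|Hz'].
      * subst z'. lra.
      * apply: (old_in_box Hz' (a1 := fl (NF (val c))) (a2 := fr (NF (val q))) (b1 := fb (NF (val c)))
          (b2 := ft (NF (val c)))) => //; lra.
    + have Hz := valP z''. apply: (LC Hq Hc Hz Hp0).
      * exact/mx_le.
      * exact/mx_le.
      * exact/my_le.
      * exact/my_le.
Qed.

Lemma fv_sub u Z : frame_ok Z -> X - dl < fl Z -> fr Z < X + dl -> Y - dl < fb Z -> ft Z < Y + dl ->
  fl (F1 u) <= fl Z -> fr Z <= fr (F1 u) -> fb (F1 u) <= fb Z -> ft Z <= ft (F1 u) ->
  forall x y, on_frame (F1 v) x y -> in_region (F1 u) x y.
Proof.
  move=> OZ H1 H2 H3 H4 H5 H6 H7 H8 x y Hxy.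
  case: (eqVneq u v) => [->|Huv].
  - rewrite /in_region. exact: on_frame_box (ok1 v) Hxy.
  - rewrite /frame_ok in OZ.
    have := dl_good Huv. rewrite /GoodW. case=> [[A1 [A2 [A3 A4]]]|A].
    + apply: fv_in_region => //; lra.
    + exfalso. have := ok1 u. rewrite /frame_ok. case: A => [A|[A|[A|A]]]; lra.
Qed.

Lemma glue_rfg : restricted_frame_graph gl.
Proof.
  split.
  { case=> [x|z] /=; [exact: irr1 | exact: irr2]. }
  exists FF. split; first exact: FF_ok.
  have Hdec : forall a b : W, (exists x y, a = inl x /\ b = inl y) \/
                (forall x y, a = inl x -> b = inl y -> False).
  { case=> [x|z]; case=> [y|z']; [left; by exists x, y| right; done | right; done | right; done]. }
  split.
  { move=> a b Hab. case: (Hdec a b) => [[x [y [Ea Eb]]]|Hni].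
    - subst a b. have Hne : x != y by apply/eqP => E; move: Hab; rewrite E eqxx. rewrite /gl /=. exact: ed1 Hne.
    - exact: good_edge (good_new Hab Hni). }
  split.
  { move=> a b Hab x y. case: (Hdec a b) => [[x' [y' [Ea Eb]]]|Hni].
    - subst a b. have Hne : x' != y' by apply/eqP => E; move: Hab; rewrite E eqxx. move=> Hc; exact: (h1 Hne Hc).
    - apply: cond1; [exact: FF_ok | exact: FF_ok | exact: good_relg (good_new Hab Hni)]. }
  split.
  { move=> a b Hab x y. case: (Hdec a b) => [[x' [y' [Ea Eb]]]|Hni].
    - subst a b. have Hne : x' != y' by apply/eqP => E; move: Hab; rewrite E eqxx. move=> Hc; exact: (h2 Hne Hc).
    - apply: cond2; [exact: FF_ok | exact: FF_ok | exact: good_relg (good_new Hab Hni)]. }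
  split.
  { move=> a b Hab. case: (Hdec a b) => [[x' [y' [Ea Eb]]]|Hni].
    - subst a b. have Hne : x' != y' by apply/eqP => E; move: Hab; rewrite E eqxx. exact: h3 Hne.
    - apply: cond3; [exact: FF_ok | exact: FF_ok | exact: good_relg (good_new Hab Hni)]. }
  move=> u w Huw Hm z Hz.
  have [R1 [R2 [R3 [R4 [R5 [R6 [R7 R8]]]]]]] := region_box (FF_ok z) Hz.
  case: (Hdec u w) => [[u' [w' [Eu Ew]]]|Hni].
  - subst u w. have Huw' : u' != w' by apply/eqP => E; move: Huw; rewrite E eqxx.
    case: z Hz R1 R2 R3 R4 R5 R6 R7 R8 => [z'|z''] Hz R1 R2 R3 R4 R5 R6 R7 R8.
    + exact: (h4 Huw' Hm Hz).
    + have Hz'' := valP z''. have [B1 [B2 [B3 [B4 _]]]] := NF_box Hz''.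
      apply: (h4 Huw' Hm (z := v)) => x y Hxy. split.
      * apply: (fv_sub (Z := NF (val z'')) (NF_ok Hz'')) => //; lra.
      * apply: (fv_sub (Z := NF (val z'')) (NF_ok Hz'')) => //; lra.
  - have G := good_new Huw Hni. case: G => [[Gl [P|P]]|[Gl S]].
    + exact: (poke4 Hni P R2 R3 R6 R8).
    + have Hni' : forall x y, w = inl x -> u = inl y -> False by move=> x y E1 E2; exact: (Hni y x E2 E1).
      exact: (poke4 Hni' P R1 R4 R5 R7).
    + exact: (sep_nomeet (FF_ok u) (FF_ok w) S Hm).
Qed.

End Asm.

Theorem lemma4p3 (V1 V2 : finType) (e1 : rel V1) (e2 : rel V2) (p : V2) (v : V1) :
  restricted_frame_graph e1 -> chandelier e2 p ->
  restricted_frame_graph (glue p e1 e2 v).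
Proof.
  move=> [irr1 [F1 [ok1 [ed1 [h1 [h2 [h3 h4]]]]]]] Hch.
  have [irr2 [sym2 _]] := Hch.
  have [NF0 [Xn [Xn0 [LB [LR [LC LV]]]]]] := chand_layout Hch.
  have [d [dpos dgood]] : exists d, Rlt 0 d /\
      forall w d', Rlt 0 d' /\ Rle d' d -> w != v -> GoodW v F1 w d'.
  { apply: (fin_delta (P := fun w d' => w != v -> GoodW v F1 w d')) => w.
    case: (eqVneq w v) => [->|Hw].
    - exists R1. split; first lra. move=> d' _ H. by case/eqP: H.
    - have [d0 [H0 H1]] := good_exists ok1 h1 Hw. exists d0. split => // d' Hd' _. exact: H1. }
  have Ov := ok1 v. rewrite /frame_ok in Ov.
  set dl := Rmin d (Rmin ((X v F1 - fl (F1 v)) / 2) ((Y v F1 - fb (F1 v)) / 2)).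
  have M1 := Rmin_l d (Rmin ((X v F1 - fl (F1 v)) / 2) ((Y v F1 - fb (F1 v)) / 2)).
  have M2 := Rmin_r d (Rmin ((X v F1 - fl (F1 v)) / 2) ((Y v F1 - fb (F1 v)) / 2)).
  have M3 := Rmin_l ((X v F1 - fl (F1 v)) / 2) ((Y v F1 - fb (F1 v)) / 2).
  have M4 := Rmin_r ((X v F1 - fl (F1 v)) / 2) ((Y v F1 - fb (F1 v)) / 2).
  rewrite -/dl in M1 M2.
  have HX : Rlt 0 (X v F1 - fl (F1 v)) by rewrite /X; lra.
  have HY : Rlt 0 (Y v F1 - fb (F1 v)) by rewrite /Y; lra.
  have dlpos : Rlt 0 dl.
  { rewrite /dl. repeat apply: Rmin_glb_lt; lra. }
  apply: (glue_rfg irr1 ok1 ed1 h1 h2 h3 h4 irr2 sym2 Xn0 LB LR LC LV (dl := dl)).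
  - exact: dlpos.
  - move=> w Hw. exact: (dgood w dl (conj dlpos M1) Hw).
  - lra.
  - lra.
Qed.
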